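(* Let $G$ be a finite simple undirected connected graph, and let $c:V(G)\to \mathbb{R}_{>0}$ and $\kappa:V(G)\to \mathbb{Z}$ be functions such that $0\leq \kappa(u)\leq d_G(u)$ for every vertex $u$ of $G$. Then $$\alpha(G,c,\kappa) = \sum_{u\in V(G)} \frac{c(u)(\kappa(u)+1)}{d_G(u)+1}$$ holds if and only if either (i) $\kappa(u)=d_G(u)$ for every vertex $u$ of $G$, or (ii) $G$ is a clique (complete graph) and both $c$ and $\kappa$ are constant on $V(G)$.
   Context: $d_G(u)$ denotes the degree of $u$ in $G$, and $[n]=\{1,\dots,n\}$. For a set $I\subseteq V(G)$, its $c$-weight is $c(I)=\sum_{u\in I}c(u)$. A set $I\subseteq V(G)$ is called $\kappa$-degenerate in $G$ if there is a linear ordering $u_1,\ldots,u_k$ of the vertices of $I$ such that for every $i\in[k]$, $u_i$ has at most $\kappa(u_i)$ neighbors in $\{u_j: j\in[i-1]\}$. $\alpha(G,c,\kappa)$ denotes the maximum $c$-weight of a $\kappa$-degenerate set of vertices of $G$. (It is known that always $\alpha(G,c,\kappa)\geq \sum_{u\in V(G)} \frac{c(u)(\kappa(u)+1)}{d_G(u)+1}$.) *)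

(* Defs.v *)
From HB Require Import structures.
From mathcomp Require Import all_boot all_order all_algebra.
Set Implicit Arguments. Unset Strict Implicit. Unset Printing Implicit Defensive.
Import Order.TTheory GRing.Theory Num.Theory.
Local Open Scope ring_scope.

Definition simple_graph (T : finType) (e : rel T) : Prop :=
  irreflexive e /\ symmetric e.

Definition graph_connected (T : finType) (e : rel T) : Prop :=
  forall x y : T, connect e x y.

Definition deg (T : finType) (e : rel T) (u : T) : nat := #|[set v | e u v]|.

Definition weight (T : finType) (R : numDomainType) (c : T -> R) (I : {set T}) : R :=
  \sum_(u in I) c u.

(* I is kappa-degenerate: there is a linear ordering u_1..u_k of I (k = |I|,
   given as a duplicate-free tuple s enumerating I) such that each u_i has at
   most kappa(u_i) neighbours among u_1..u_{i-1} (= take i s, 0-indexed). *)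
Definition kdegenerate (T : finType) (e : rel T) (kappa : T -> int) (I : {set T}) : bool :=
  [exists s : #|I|.-tuple T,
    [&& uniq s, [set x in s] == I &
        [forall i : 'I_#|I|,
           (count (e (tnth s i)) (take i s))%:Z <= kappa (tnth s i)]]].

(* alpha(G,c,kappa): the maximum c-weight of a kappa-degenerate set.  The empty
   set is always kappa-degenerate (weight 0), so taking the max with initial
   value 0 gives exactly this maximum. *)
Definition alpha (T : finType) (e : rel T) (R : realDomainType) (c : T -> R)
  (kappa : T -> int) : R :=
  \big[Num.max/0]_(I : {set T} | kdegenerate e kappa I) weight c I.

(* Main.v *)
Require Import Defs.
From HB Require Import structures.
From mathcomp Require Import all_boot all_order all_algebra.
From mathcomp Require Import all_fingroup.
From mathcomp Require Import ring lra zify.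
Import Order.TTheory GRing.Theory Num.Theory.
Local Open Scope ring_scope.

Set Implicit Arguments. Unset Strict Implicit. Unset Printing Implicit Defensive.

Local Open Scope ring_scope.

Lemma take_index_filter (T : eqType) (p : pred T) (L : seq T) x :
  p x -> take (index x (filter p L)) (filter p L) = filter p (take (index x L) L).
Proof.
move=> px; elim: L => [|a L IH] //=.
case: (eqVneq a x) => [->|ax]; first by rewrite px /= eqxx.
by case pa: (p a) => /=; rewrite ?(negPf ax) ?pa /= IH.
Qed.

Lemma size_take_index (T : eqType) (x : T) s : size (take (index x s) s) = index x s.
Proof. by rewrite size_takel // index_size. Qed.

Lemma notin_take_index (T : eqType) (x : T) s : x \notin take (index x s) s.
Proof. by apply/negP => /index_ltn; rewrite ltnn. Qed.

Definition Lord (T : finType) (s : {perm T}) : seq T := map s (enum T).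

Lemma Lord_uniq (T : finType) (s : {perm T}) : uniq (Lord s).
Proof. by rewrite map_inj_uniq ?enum_uniq //; apply: perm_inj. Qed.

Lemma mem_Lord (T : finType) (s : {perm T}) z : z \in Lord s.
Proof. by rewrite -[z](permKV s) map_f // mem_enum. Qed.

Lemma Lord_mul (T : finType) (s t : {perm T}) : Lord (s * t)%g = map t (Lord s).
Proof. by rewrite /Lord -map_comp; apply: eq_map => z /=; rewrite permM. Qed.

Definition Iset (T : finType) (e : rel T) (kappa : T -> int) (s : {perm T}) : {set T} :=
  [set z | (count (e z) (take (index z (Lord s)) (Lord s)))%:Z <= kappa z].

Lemma Iset_kdeg (T : finType) (e : rel T) (kappa : T -> int) (s : {perm T}) :
  kdegenerate e kappa (Iset e kappa s).
Proof.
set I := Iset e kappa s; set L := Lord s.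
set f := filter (mem I) L.
have uf : uniq f by rewrite filter_uniq // Lord_uniq.
have memf : f =i I by move=> z; rewrite mem_filter mem_Lord andbT.
have sz : size f == #|I|.
  by rewrite -(card_uniqP uf); apply/eqP/eq_card.
apply/existsP; exists (Tuple sz); apply/and3P; split => //.
  by apply/eqP/setP => z; rewrite inE /= memf.
apply/forallP => i; rewrite (tnth_nth (enum_default i)) /=.
set x := nth _ f i.
have xf : x \in f by rewrite mem_nth // (eqP sz).
have xI : x \in I by rewrite -memf.
have -> : (i : nat) = index x f by rewrite index_uniq // (eqP sz).
rewrite take_index_filter //.
apply: le_trans (_ : (count (e x) (take (index x L) L))%:Z <= _); last first.
  by move: xI; rewrite inE.
rewrite lez_nat count_filter; apply: sub_count => z /andP [].
by [].
Qed.


Local Close Scope ring_scope.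

Definition rk (T : finType) (A : {set T}) (s : {perm T}) (w : T) : nat :=
  count (mem A) (take (index w (Lord s)) (Lord s)).

Lemma rk_index (T : finType) (A : {set T}) s w : w \in A ->
  rk A s w = index w (filter (mem A) (Lord s)).
Proof.
move=> wA; rewrite /rk -size_filter -take_index_filter //.
by rewrite size_take_index.
Qed.

Lemma sum_le_nat n k : k < n -> \sum_(0 <= i < n) (i <= k) = k.+1.
Proof.
elim: n => [//|n IH]; rewrite big_nat_recr //= ltnS leq_eqVlt.
case/orP => [/eqP ->|kn]; last by rewrite IH // (leqNgt n k) kn addn0.
rewrite leqnn addn1; congr S.
rewrite (eq_big_nat _ _ (F2 := fun _ => 1%N)).
  by rewrite sum_nat_const_nat muln1 subn0.
by move=> i /andP [_ /ltnW ->].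
Qed.

Lemma sum_rk (T : finType) (A : {set T}) s k : k < #|A| ->
  \sum_(w in A) (rk A s w <= k) = k.+1.
Proof.
move=> kA; set f := filter (mem A) (Lord s).
have uf : uniq f by rewrite filter_uniq // Lord_uniq.
have memf : f =i A by move=> z; rewrite mem_filter mem_Lord andbT.
have szf : size f = #|A| by rewrite -(card_uniqP uf); apply/eq_card.
rewrite -big_enum (perm_big f) /=; last first.
  by apply: uniq_perm; rewrite ?enum_uniq // => z; rewrite mem_enum memf.
rewrite (eq_big_seq (fun w => nat_of_bool (index w f <= k))); last first.
  by move=> w; rewrite memf => wA; rewrite rk_index.
rewrite (big_nth (enum_default (Ordinal kA))) szf -(sum_le_nat kA).
by apply: eq_big_nat => i /andP [_ ilt]; rewrite index_uniq // szf.
Qed.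

Lemma rk_tperm (T : finType) (A : {set T}) s u w : u \in A -> w \in A ->
  rk A (s * tperm u w)%g w = rk A s u.
Proof.
move=> uA wA; rewrite /rk Lord_mul.
set t := tperm u w; have tu : t u = w := tpermL u w.
rewrite -{1}tu index_map; last exact: perm_inj.
rewrite -map_take count_map; apply: eq_count => z /=.
by case: tpermP => [->|->|] //; rewrite ?uA ?wA.
Qed.

Lemma count_rk (T : finType) (A : {set T}) u k : u \in A -> k < #|A| ->
  #|A| * (\sum_(s : {perm T}) (rk A s u <= k)) = #|{perm T}| * k.+1.
Proof.
move=> uA kA.
have -> : #|{perm T}| * k.+1 = \sum_(s : {perm T}) \sum_(w in A) (rk A s w <= k).
  by rewrite (eq_bigr (fun _ => k.+1)) ?sum_nat_const // => s _; rewrite sum_rk.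
rewrite exchange_big /= -sum_nat_const.
apply: eq_bigr => w wA.
rewrite (reindex_inj (mulIg (tperm u w))) /=.
by apply: eq_bigr => s _; rewrite tpermC rk_tperm.
Qed.


Local Open Scope ring_scope.

Definition Nc (T : finType) (e : rel T) (u : T) : {set T} := [set v | (v == u) || e u v].

Lemma card_Nc (T : finType) (e : rel T) u : irreflexive e -> #|Nc e u| = (deg e u).+1.
Proof.
move=> irr; have -> : Nc e u = u |: [set v | e u v].
  by apply/setP => v; rewrite !inE.
by rewrite cardsU1 inE irr.
Qed.

Lemma mem_Iset (T : finType) (e : rel T) kappa s u :
  irreflexive e ->
  (u \in Iset e kappa s) = ((rk (Nc e u) s u)%:Z <= kappa u).
Proof.
move=> irr; rewrite inE /rk; congr (_%:Z <= _); apply: eq_in_count => z zin /=.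
have zu : z != u.
  by apply/negP => /eqP zu; move: zin; rewrite zu (negPf (notin_take_index u (Lord s))).
by rewrite inE (negPf zu).
Qed.

Lemma count_Iset (T : finType) (e : rel T) kappa u (k : nat) :
  irreflexive e -> kappa u = k%:Z -> (k <= deg e u)%N ->
  ((deg e u).+1 * (\sum_(s : {perm T}) (u \in Iset e kappa s)) = #|{perm T}| * k.+1)%N.
Proof.
move=> irr ku kd; rewrite -card_Nc // -(@count_rk _ (Nc e u) u) ?card_Nc ?ltnS //; last first.
  by rewrite inE eqxx.
congr (_ * _)%N; apply: eq_bigr => s _.
by rewrite mem_Iset // ku lez_nat.
Qed.

Lemma le_bigmax_seq (R : realDomainType) (I : eqType) (r : seq I) (P : pred I)
  (F : I -> R) i : i \in r -> P i -> F i <= \big[Num.max/0]_(j <- r | P j) F j.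
Proof.
elim: r => [//|a r IH]; rewrite inE big_cons => /orP [/eqP <-|ir] Pi.
  by rewrite Pi le_max lexx.
case: (P a); last exact: IH.
by rewrite le_max IH ?orbT.
Qed.

Lemma weight_le_alpha (T : finType) (e : rel T) (R : realDomainType) (c : T -> R) kappa I :
  kdegenerate e kappa I -> weight c I <= alpha e c kappa.
Proof. by move=> kI; apply: le_bigmax_seq => //; rewrite mem_index_enum. Qed.

Lemma alpha_le (T : finType) (e : rel T) (R : realDomainType) (c : T -> R) kappa B :
  0 <= B -> (forall I, kdegenerate e kappa I -> weight c I <= B) -> alpha e c kappa <= B.
Proof.
move=> B0 H; rewrite /alpha; apply: (big_ind (fun x => x <= B)) => //.
by move=> x y xB yB; rewrite ge_max xB yB.
Qed.

Definition bound (T : finType) (e : rel T) (R : realFieldType) (c : T -> R) (kappa : T -> int) :=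
  \sum_(u : T) c u * ((kappa u)%:~R + 1) / ((deg e u)%:R + 1).

Lemma sum_weight (R : realFieldType) (T : finType) (e : rel T) (c : T -> R) kappa :
  irreflexive e -> (forall u, 0 <= kappa u /\ kappa u <= (deg e u)%:Z) ->
  \sum_(s : {perm T}) weight c (Iset e kappa s) = #|{perm T}|%:R * bound e c kappa.
Proof.
move=> irr hk.
have -> : \sum_(s : {perm T}) weight c (Iset e kappa s) =
  \sum_(s : {perm T}) \sum_u c u * (u \in Iset e kappa s)%:R.
  apply: eq_bigr => s _; rewrite /weight big_mkcond /=.
  by apply: eq_bigr => u _; case: (u \in _); rewrite ?mulr1 ?mulr0.
rewrite exchange_big /bound mulr_sumr; apply: eq_bigr => u _.
rewrite -mulr_sumr -natr_sum.
case: (hk u) => k0 kd.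
have [k ku] : exists k : nat, kappa u = k%:Z.
  by exists `|kappa u|%N; rewrite gez0_abs.
move: kd; rewrite ku lez_nat => kd.
have := count_Iset irr ku kd.
move/(congr1 (fun n : nat => n%:R : R)); rewrite !natrM => H.
rewrite -pmulrn.
set M := (\sum_s _)%N in H *.
set N := #|{perm T}| in H *.
have d0 : (deg e u)%:R + 1 != 0 :> R by rewrite natr1 pnatr_eq0.
have -> : M%:R = N%:R * (k%:R + 1) / ((deg e u)%:R + 1) :> R.
  apply: (mulIf d0); rewrite mulfVK //; move: H; rewrite -!natr1 => H.
  by rewrite mulrC H.
by field.
Qed.


Local Open Scope ring_scope.

Lemma perm_of_list (T : finType) (L : seq T) :
  uniq L -> (forall z, z \in L) -> exists s : {perm T}, Lord s = L.
Proof.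
move=> uL allL.
have szL : size L = #|T|.
  by rewrite -(card_uniqP uL); apply: eq_card => z; rewrite allL.
pose f z := nth z L (index z (enum T)).
have ilt z : (index z (enum T) < size L)%N by rewrite szL cardT index_mem mem_enum.
have finj : injective f.
  move=> a b; rewrite /f (set_nth_default a b (ilt b)) => /eqP.
  rewrite nth_uniq // => /eqP H.
  by rewrite -[a](nth_index a (mem_enum _ a)) H nth_index ?mem_enum.
exists (perm finj).
have sze : size (enum T) = size L by rewrite szL cardT.
case E: L => [|x0 L'].
  by apply/eqP; rewrite -size_eq0 size_map sze E.
rewrite -E.
apply: (@eq_from_nth _ x0); first by rewrite size_map sze.
move=> i; rewrite size_map => ilt'.
rewrite (nth_map x0) // permE /f (set_nth_default x0 _ (ilt _)).
by rewrite index_uniq ?enum_uniq.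
Qed.


Local Open Scope ring_scope.

Lemma take_idx_P (T : eqType) (P r : seq T) z : z \in P ->
  take (index z (P ++ r)) (P ++ r) = take (index z P) P.
Proof. by move=> zP; rewrite index_cat zP take_cat index_mem zP. Qed.

Lemma take_idx_Q (T : eqType) (P Q : seq T) x y z : z \notin P -> z != x -> z != y ->
  take (index z (P ++ x :: y :: Q)) (P ++ x :: y :: Q) = P ++ x :: y :: take (index z Q) Q.
Proof.
move=> zP zx zy; rewrite index_cat (negPf zP) /= eq_sym (negPf zx) eq_sym (negPf zy).
by rewrite take_cat ltnNge leq_addr /= addKn.
Qed.

Lemma count_swap (T : Type) (a : pred T) (P Q : seq T) x y :
  count a (P ++ x :: y :: Q) = count a (P ++ y :: x :: Q).
Proof. by rewrite !count_cat /=; congr (_ + _)%N; apply: addnCA. Qed.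

Lemma take_idx_x (T : eqType) (P Q : seq T) x y : x \notin P ->
  take (index x (P ++ x :: y :: Q)) (P ++ x :: y :: Q) = P.
Proof. by move=> xP; rewrite take_pivot. Qed.

Lemma take_idx_y (T : eqType) (P Q : seq T) x y : y \notin P -> y != x ->
  take (index y (P ++ x :: y :: Q)) (P ++ x :: y :: Q) = rcons P x.
Proof.
move=> yP yx; rewrite -cat_rcons take_pivot //.
by rewrite -cats1 mem_cat negb_or yP inE.
Qed.

Lemma weight_ind (R : realFieldType) (T : finType) (c : T -> R) (I : {set T}) :
  weight c I = \sum_z c z * (z \in I)%:R.
Proof.
rewrite /weight big_mkcond /=.
by apply: eq_bigr => u _; case: (u \in _); rewrite ?mulr1 ?mulr0.
Qed.

Lemma weight_diff (R : realFieldType) (T : finType) (c : T -> R) (I J : {set T}) x y :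
  x != y -> (forall z, z != x -> z != y -> (z \in I) = (z \in J)) ->
  weight c I - weight c J =
  c x * ((x \in I)%:R - (x \in J)%:R) + c y * ((y \in I)%:R - (y \in J)%:R).
Proof.
move=> xy H; rewrite !weight_ind -sumrB (bigD1 x) //= (bigD1 y) ?(eq_sym y) //=.
rewrite big1 ?addr0 ?mulrBr //.
by move=> z /andP [zy zx]; rewrite H // subrr.
Qed.

Lemma swap_cond (R : realFieldType) (T : finType) (e : rel T) (c : T -> R)
  (kappa : T -> int) (w0 : R) x y (P : seq T) :
  simple_graph e -> (forall u, 0 < c u) ->
  (forall s, weight c (Iset e kappa s) = w0) ->
  e x y -> uniq P -> x \notin P -> y \notin P ->
  (count (e x) P)%:Z = kappa x ->
  (count (e y) P)%:Z = kappa y /\ c x = c y.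
Proof.
move=> [irr sym] cpos HW exy uP xP yP ax.
have yx : y != x by apply/eqP => yx; move: exy; rewrite yx irr.
pose Q := [seq z <- enum T | z \notin x :: y :: P].
pose L := P ++ x :: y :: Q.
pose L' := P ++ y :: x :: Q.
have memQ z : (z \in Q) = (z \notin x :: y :: P) by rewrite mem_filter mem_enum andbT.
have uL : uniq L.
  have pL : perm_eq L ([:: x; y] ++ P ++ Q).
    by rewrite /L -[x :: y :: Q]/([:: x; y] ++ Q) (perm_catCA P [:: x; y] Q).
  rewrite (perm_uniq pL) /= cat_uniq.
  rewrite !inE !mem_cat !memQ !inE !eqxx !orbT /= eq_sym (negPf yx) (negPf xP) (negPf yP) uP.
  rewrite filter_uniq ?enum_uniq // andbT /=.
  by apply/hasPn => z; rewrite memQ !inE => /norP [_ /norP [_ zP]].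
have allL z : z \in L.
  rewrite /L mem_cat !inE memQ !inE.
  by case: (z \in P); case: (z == x); case: (z == y).
have [s Ls] := perm_of_list uL allL.
have Ls' : Lord (s * tperm x y)%g = L'.
  rewrite Lord_mul Ls /L /L' map_cat /= tpermL tpermR.
  have fixin (l : seq T) : x \notin l -> y \notin l -> map (tperm x y) l = l.
    move=> xl yl; rewrite -[RHS]map_id; apply/eq_in_map => z zl.
    by rewrite tpermD //; apply/eqP => zx; move: zl; rewrite -zx => zl;
      [move: xl | move: yl]; rewrite zl.
  rewrite !fixin //; rewrite memQ !inE ?eqxx ?orbT //.
have memI (t : {perm T}) (l : seq T) z : Lord t = l ->
  (z \in Iset e kappa t) = ((count (e z) (take (index z l) l))%:Z <= kappa z).
  by move=> Lt; rewrite inE Lt.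
have other z : z != x -> z != y -> (z \in Iset e kappa s) = (z \in Iset e kappa (s * tperm x y)%g).
  move=> zx zy; rewrite (memI _ _ _ Ls) (memI _ _ _ Ls') /L /L'.
  case zP: (z \in P).
    by rewrite !take_idx_P.
  by rewrite take_idx_Q ?zP // take_idx_Q ?zP // count_swap.
have cx : count (e x) (rcons P y) = (count (e x) P).+1.
  by rewrite -cats1 count_cat /= exy addn1.
have cy : count (e y) (rcons P x) = (count (e y) P).+1.
  by rewrite -cats1 count_cat /= sym exy addn1.
have x1 : x \in Iset e kappa s by rewrite (memI _ _ _ Ls) /L (@take_idx_x _ P Q x y xP) ax.
have xy : x != y by rewrite eq_sym.
have x2 : (x \in Iset e kappa (s * tperm x y)%g) = false.
  by rewrite (memI _ _ _ Ls') /L' (@take_idx_y _ P Q y x xP xy) cx -ax lez_nat ltnn.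
have y1 : (y \in Iset e kappa s) = ((count (e y) P).+1%:Z <= kappa y).
  by rewrite (memI _ _ _ Ls) /L (@take_idx_y _ P Q x y yP yx) cy.
have y2 : (y \in Iset e kappa (s * tperm x y)%g) = ((count (e y) P)%:Z <= kappa y).
  by rewrite (memI _ _ _ Ls') /L' (@take_idx_x _ P Q y x yP).
have := weight_diff c xy other.
rewrite !HW subrr x1 x2 y1 y2 => H.
set b := count (e y) P in H *.
have e1 : ((b.+1)%:Z <= kappa y) = (b%:Z < kappa y).
  by apply/idP/idP => /= h; lia.
rewrite e1 in H; have cx0 := cpos x; have cy0 := cpos y.
case: (ltgtP (b%:Z) (kappa y)) H => hb H.
- by move: H; rewrite subrr mulr0 addr0 subr0 mulr1 => H; rewrite -H ltxx in cx0.
- by move: H; rewrite subrr mulr0 addr0 subr0 mulr1 => H; rewrite -H ltxx in cx0.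
- split => //; move: H; rewrite subr0 sub0r mulr1 mulrN1 => /eqP.
  by rewrite eq_sym subr_eq0 => /eqP.
Qed.


Local Open Scope ring_scope.

Lemma nbr_size (T : finType) (e : rel T) v w : e v w ->
  (size (enum [set z | e v z && (z != w)])).+1 = deg e v.
Proof.
move=> evw; rewrite -cardE /deg (cardsD1 w [set z | e v z]) inE evw add1n.
by congr S; apply: eq_card => z; rewrite !inE andbC.
Qed.

Lemma count_all_size (T : eqType) (a : pred T) (s : seq T) :
  (forall z, z \in s -> a z) -> count a s = size s.
Proof. by move=> H; apply/eqP; rewrite -all_count; apply/allP. Qed.

Lemma key_edge (R : realFieldType) (T : finType) (e : rel T) (c : T -> R) (kappa : T -> int) x y :
  simple_graph e ->
  (forall u, 0 <= kappa u) ->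
  (forall x y P, e x y -> uniq P -> x \notin P -> y \notin P ->
     (count (e x) P)%:Z = kappa x -> (count (e y) P)%:Z = kappa y /\ c x = c y) ->
  e x y -> kappa x < (deg e x)%:Z ->
  [/\ Nc e y = Nc e x, kappa y = kappa x, c y = c x & deg e y = deg e x].
Proof.
move=> [irr sym] k0 HC exy kxd.
have eyx : e y x by rewrite sym.
have xy : x != y by apply/eqP => xy; move: exy; rewrite xy irr.
have [kx kxE] : exists k : nat, kappa x = k%:Z by exists `|kappa x|%N; rewrite gez0_abs.
have [ky kyE] : exists k : nat, kappa y = k%:Z by exists `|kappa y|%N; rewrite gez0_abs.
set lA := enum [set z | e x z && (z != y)].
set lB := enum [set z | e y z && (z != x)].
have szA := nbr_size exy; have szB := nbr_size eyx.
fold lA in szA; fold lB in szB.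
have mA z : (z \in lA) = (e x z && (z != y)) by rewrite mem_enum inE.
have mB z : (z \in lB) = (e y z && (z != x)) by rewrite mem_enum inE.
have uA : uniq lA by apply: enum_uniq.
have uB : uniq lB by apply: enum_uniq.
move: kxd; rewrite kxE ltz_nat -szA ltnS => kxA.
set P0 := take kx lA.
have mP0 z : z \in P0 -> e x z && (z != y) by move/mem_take; rewrite mA.
have uP0 : uniq P0 by apply: take_uniq.
have xP0 : x \notin P0 by apply/negP => /mP0; rewrite irr.
have yP0 : y \notin P0 by apply/negP => /mP0; rewrite eqxx andbF.
have cP0 : count (e x) P0 = kx.
  by rewrite count_all_size ?size_takel // => z /mP0 /andP [].
have [cyP0 cxy] := HC x y P0 exy uP0 xP0 yP0 (etrans (congr1 Posz cP0) (esym kxE)).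
have st1 z : e y z -> z != x -> e x z.
  move=> eyz zx; apply/negPn/negP => nexz.
  have zy : z != y by apply/eqP => zy; move: eyz; rewrite zy irr.
  have zP0 : z \notin P0 by apply/negP => /mP0; rewrite (negbTE nexz).
  have := HC x y (z :: P0) exy; rewrite /= zP0 uP0 !inE (negPf xP0) (negPf yP0).
  rewrite eq_sym (negPf zx) eq_sym (negPf zy) (negbTE nexz) eyz add0n cP0 => /(_ isT isT isT).
  case/(_ (esym kxE)) => h _; move: h; rewrite -cyP0 => /eqP; rewrite eqz_nat.
  by rewrite add1n (gtn_eqF (ltnSn _)).
have kyB : (ky <= size lB)%N.
  move: cyP0; rewrite kyE => -[cyP0].
  have : (count (e y) P0 <= size lB)%N.
    rewrite -size_filter; apply: uniq_leq_size; first exact: filter_uniq.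
    move=> z; rewrite mem_filter mB => /andP [eyz zP].
    by rewrite eyz; apply/negP => /eqP zx; rewrite zx (negPf xP0) in zP.
  by rewrite -cyP0.
set Q0 := take ky lB.
have mQ0 z : z \in Q0 -> e y z && (z != x) by move/mem_take; rewrite mB.
have uQ0 : uniq Q0 by apply: take_uniq.
have yQ0 : y \notin Q0 by apply/negP => /mQ0; rewrite irr.
have xQ0 : x \notin Q0 by apply/negP => /mQ0; rewrite eqxx andbF.
have cQ0 : count (e y) Q0 = ky.
  by rewrite count_all_size ?size_takel // => z /mQ0 /andP [].
have [cxQ0 _] := HC y x Q0 eyx uQ0 yQ0 xQ0 (etrans (congr1 Posz cQ0) (esym kyE)).
have cxQ0' : count (e x) Q0 = ky.
  by rewrite count_all_size ?size_takel // => z /mQ0 /andP [eyz zx]; apply: st1.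
have kxy : kx = ky.
  by move: cxQ0; rewrite cxQ0' kxE => -[].
have st3 z : e x z -> z != y -> e y z.
  move=> exz zy; apply/negPn/negP => neyz.
  have zx : z != x by apply/eqP => zx; move: exz; rewrite zx irr.
  have zQ0 : z \notin Q0 by apply/negP => /mQ0; rewrite (negbTE neyz).
  have := HC y x (z :: Q0) eyx; rewrite /= zQ0 uQ0 !inE (negPf xQ0) (negPf yQ0).
  rewrite (eq_sym y z) (eq_sym x z) (negPf zx) (negPf zy) (negbTE neyz) exz add0n cQ0 => /(_ isT isT isT).
  case/(_ (esym kyE)) => h _; move: h; rewrite cxQ0' kxE kxy => /eqP; rewrite eqz_nat.
  by rewrite add1n (gtn_eqF (ltnSn _)).
have NcE : Nc e y = Nc e x.
  apply/setP => z; rewrite !inE.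
  case: (eqVneq z x) => [->|zx]; first by rewrite eyx orbT.
  case: (eqVneq z y) => [->|zy]; first by rewrite exy orbT.
  by rewrite /=; apply/idP/idP => h; [exact: st1 h zx | exact: st3 h zy].
split => //; first by rewrite kyE kxy.
by rewrite szA; apply/eqP; rewrite -eqSS -!card_Nc // NcE.
Qed.


Local Open Scope ring_scope.

Lemma propagate (R : realFieldType) (T : finType) (e : rel T) (c : T -> R) (kappa : T -> int) x0 :
  simple_graph e -> graph_connected e ->
  (forall u, 0 <= kappa u) ->
  (forall x y P, e x y -> uniq P -> x \notin P -> y \notin P ->
     (count (e x) P)%:Z = kappa x -> (count (e y) P)%:Z = kappa y /\ c x = c y) ->
  kappa x0 < (deg e x0)%:Z ->
  forall z, [/\ Nc e z = Nc e x0, kappa z = kappa x0, c z = c x0 & deg e z = deg e x0].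
Proof.
move=> sg conn k0 HC kd z.
have /connectP [p pth ->] := conn x0 z.
pose Q v := [/\ Nc e v = Nc e x0, kappa v = kappa x0, c v = c x0 & deg e v = deg e x0].
have gen : forall p v, path e v p -> Q v -> Q (last v p).
  elim=> [//|w q IH] v /= /andP [evw pth'] [N1 K1 C1 D1].
  apply: IH => //.
  have [|N2 K2 C2 D2] := key_edge sg k0 HC evw; first by rewrite K1 D1.
  by split; congruence.
by apply: gen.
Qed.

Lemma bound_ge0 (R : realFieldType) (T : finType) (e : rel T) (c : T -> R) (kappa : T -> int) :
  (forall u, 0 < c u) -> (forall u, 0 <= kappa u) -> 0 <= bound e c kappa.
Proof.
move=> cp k0; apply: sumr_ge0 => u _.
apply: divr_ge0; last by rewrite addr_ge0 ?ler0n.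
apply: mulr_ge0; first exact: ltW.
by rewrite addr_ge0 // ler0z.
Qed.

Lemma perm_card_gt0 (T : finType) : (0 < #|{perm T}|)%N.
Proof. by apply/card_gt0P; exists 1%g. Qed.

Lemma bound_le_alpha (R : realFieldType) (T : finType) (e : rel T) (c : T -> R) (kappa : T -> int) :
  irreflexive e -> (forall u, 0 <= kappa u /\ kappa u <= (deg e u)%:Z) ->
  bound e c kappa <= alpha e c kappa.
Proof.
move=> irr hk.
have N0 : 0 < #|{perm T}|%:R :> R by rewrite ltr0n perm_card_gt0.
rewrite -(ler_pM2l N0) -sum_weight // mulr_natl -sumr_const.
by apply: ler_sum => s _; apply: weight_le_alpha; apply: Iset_kdeg.
Qed.

Lemma all_W_eq (R : realFieldType) (T : finType) (e : rel T) (c : T -> R) (kappa : T -> int) :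
  irreflexive e -> (forall u, 0 <= kappa u /\ kappa u <= (deg e u)%:Z) ->
  alpha e c kappa = bound e c kappa ->
  forall s, weight c (Iset e kappa s) = alpha e c kappa.
Proof.
move=> irr hk H s.
have Hsum : \sum_(t : {perm T}) (alpha e c kappa - weight c (Iset e kappa t)) = 0.
  by rewrite sumrB sum_weight // sumr_const H mulr_natl; apply/eqP; rewrite subr_eq0.
have Hge : forall t : {perm T}, true -> 0 <= alpha e c kappa - weight c (Iset e kappa t).
  by move=> t _; rewrite subr_ge0 weight_le_alpha // Iset_kdeg.
by have := psumr_eq0P Hge Hsum (i := s) isT; move/eqP; rewrite subr_eq0 => /eqP.
Qed.


Local Open Scope ring_scope.

Lemma clique_size (T : finType) (e : rel T) (kappa : T -> int) (k : nat) (I : {set T}) :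
  (forall u v, u != v -> e u v) -> (forall u, kappa u = k%:Z) ->
  kdegenerate e kappa I -> (#|I| <= k.+1)%N.
Proof.
move=> cl kk /existsP [s /and3P [us _ /forallP H]].
case n0: #|I| => [//|n].
have ilt : (n < #|I|)%N by rewrite n0.
have := H (Ordinal ilt); rewrite kk lez_nat /=.
rewrite (tnth_nth (tnth s (Ordinal ilt))) /=.
set x := nth _ _ _.
have sz : (n < size s)%N by rewrite size_tuple.
have -> : n = index x s by rewrite index_uniq.
rewrite count_all_size ?size_take_index ?index_uniq //.
move=> z zt; apply: cl; apply/negP => /eqP xz.
by move: zt; rewrite -xz => xt; move: (notin_take_index x s); rewrite {2}/x index_uniq // xt.
Qed.

Lemma deg_clique (T : finType) (e : rel T) u :
  irreflexive e -> (forall u v, u != v -> e u v) -> deg e u = #|T|.-1.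
Proof.
move=> irr cl; rewrite /deg -(cardsC1 u); congr #|pred_of_set _|; apply/setP => v; rewrite !inE.
case: (eqVneq v u) => [->|vu]; first by rewrite irr.
by rewrite cl // eq_sym.
Qed.

Theorem theorem2' (R : realFieldType) (T : finType) (e : rel T)
  (c : T -> R) (kappa : T -> int) :
  simple_graph e -> graph_connected e ->
  (forall u, 0 < c u) ->
  (forall u, 0 <= kappa u /\ kappa u <= (deg e u)%:Z) ->
  alpha e c kappa =
    \sum_(u : T) c u * ((kappa u)%:~R + 1) / ((deg e u)%:R + 1)
  <->
  ((forall u, kappa u = (deg e u)%:Z) \/
   ((forall u v, u != v -> e u v) /\
    (forall u v, c u = c v) /\ (forall u v, kappa u = kappa v))).
Proof.
move=> sg conn cp hk; have [irr sym] := sg.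
have k0 u : 0 <= kappa u by case: (hk u).
rewrite -/(bound e c kappa).
split.
- move=> H.
  have HW := all_W_eq irr hk H.
  have HC x y P : e x y -> uniq P -> x \notin P -> y \notin P ->
     (count (e x) P)%:Z = kappa x -> (count (e y) P)%:Z = kappa y /\ c x = c y.
    by move=> *; apply: (@swap_cond R T e c kappa (alpha e c kappa)).
  case: (boolP [forall u, kappa u == (deg e u)%:Z]) => [/forallP A|/forallPn [x0 nx0]].
    by left => u; apply/eqP.
  have kd : kappa x0 < (deg e x0)%:Z by rewrite lt_neqAle nx0; case: (hk x0).
  have P := propagate sg conn k0 HC kd.
  right; split; last split.
  + move=> u v uv; have [Nu _ _ _] := P u; have [Nv _ _ _] := P v.
    have : v \in Nc e u by rewrite Nu -Nv inE eqxx.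
    by rewrite inE eq_sym (negPf uv).
  + by move=> u v; have [_ _ -> _] := P u; have [_ _ -> _] := P v.
  + by move=> u v; have [_ -> _ _] := P u; have [_ -> _ _] := P v.
- move=> H; apply/eqP; rewrite eq_le bound_le_alpha // andbT.
  apply: alpha_le; first exact: bound_ge0.
  case: H => [hd|[cl [cc kc]]] I kI.
    have -> : bound e c kappa = \sum_u c u.
      apply: eq_bigr => u _; rewrite hd -pmulrn mulfK //.
      by rewrite natr1 pnatr_eq0.
    rewrite /weight big_mkcond /=; apply: ler_sum => u _.
    by case: ifP => _ //; apply: ltW.
  case: (eqVneq #|I| 0%N) => [/eqP I0|].
    by rewrite cards_eq0 in I0; rewrite (eqP I0) /weight big_set0 bound_ge0.
  rewrite -lt0n => /card_gt0P [u0 u0I].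
  have [k kE] : exists k : nat, kappa u0 = k%:Z by exists `|kappa u0|%N; rewrite gez0_abs.
  have kk u : kappa u = k%:Z by rewrite (kc u u0).
  have := clique_size cl kk kI => Ik.
  have Tn : (0 < #|T|)%N by apply/card_gt0P; exists u0.
  have -> : bound e c kappa = c u0 * k.+1%:R.
    rewrite /bound (eq_bigr (fun _ => c u0 * k.+1%:R / #|T|%:R)).
      rewrite sumr_const (_ : #|xpredT| = #|T|) // -[_ *+ #|T|]mulr_natr mulfVK //.
      by rewrite pnatr_eq0 -lt0n.
    move=> u _; rewrite kk deg_clique // (cc u u0) -pmulrn !natr1 prednK //.
  have -> : weight c I = c u0 *+ #|I|.
    by rewrite /weight (eq_bigr (fun _ => c u0)) ?sumr_const // => u _; rewrite (cc u u0).
  by rewrite -[_ *+ #|I|]mulr_natr ler_pM2l // ler_nat.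
Qed.


Unset Implicit Arguments.
Local Open Scope ring_scope.

Theorem theorem2 (R : realFieldType) (T : finType) (e : rel T)
  (c : T -> R) (kappa : T -> int) :
  simple_graph e -> graph_connected e ->
  (forall u, 0 < c u) ->
  (forall u, 0 <= kappa u /\ kappa u <= (deg e u)%:Z) ->
  alpha e c kappa =
    \sum_(u : T) c u * ((kappa u)%:~R + 1) / ((deg e u)%:R + 1)
  <->
  ((forall u, kappa u = (deg e u)%:Z) \/
   ((forall u v, u != v -> e u v) /\
    (forall u v, c u = c v) /\ (forall u v, kappa u = kappa v))).
Proof. exact: theorem2'. Qed.
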